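(* Let $G$ be a connected graph of order at least two and let $D$ be a minimal certified dominating set of $G$. If $v$ is a vertex with $N_G[v]\subseteq D$, then $v$ is a leaf or a weak support of $G$. Moreover, the induced subgraph $G[\{v\in D\colon N_G[v]\subseteq D\}]$ is a corona (or has no vertices).
   Context: All graphs are finite and simple; $N_G[v]=N_G(v)\cup\{v\}$. A leaf is a vertex of degree one; a support is the neighbor of a leaf; a support is weak if it is adjacent to exactly one leaf and strong if adjacent to at least two leaves. A set $D\subseteq V_G$ is a dominating set of $G$ if every vertex of $V_G-D$ has a neighbor in $D$. A set $D$ is a certified dominating set of $G$ if $D$ is dominating and every vertex of $D$ has either zero or at least two neighbors in $V_G-D$; it is a minimal certified dominating set if no proper subset of $D$ is a certified dominating set. A graph is a corona if it equals $H\circ K_1$ for some graph $H$, i.e., it is obtained from $H$ by attaching one new pendant vertex to each vertex of $H$; equivalently every vertex is a leaf or adjacent to exactly one leaf. *)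

(* Defs.v *)
From mathcomp Require Import all_boot.
Set Implicit Arguments. Unset Strict Implicit. Unset Printing Implicit Defensive.

Section Graphs.
Variables (T : finType) (e : rel T).

Definition simple_graph : Prop := symmetric e /\ irreflexive e.

Definition connected_graph : Prop := forall x y : T, connect e x y.

Definition nbhd (v : T) : {set T} := [set u | e v u].
Definition cnbhd (v : T) : {set T} := v |: nbhd v.

Definition leaf (v : T) : bool := #|nbhd v| == 1.
Definition support (v : T) : bool := [exists u, e v u && leaf u].
Definition leaf_nbrs (v : T) : {set T} := [set u | e v u && leaf u].
Definition weak_support (v : T) : bool := #|leaf_nbrs v| == 1.
Definition strong_support (v : T) : bool := 2 <= #|leaf_nbrs v|.

Definition dominating (D : {set T}) : Prop :=
  forall x, x \notin D -> exists2 y, y \in D & e x y.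

Definition certified_dominating (D : {set T}) : Prop :=
  dominating D /\
  forall v, v \in D -> (#|nbhd v :\: D| = 0 \/ 2 <= #|nbhd v :\: D|).

Definition minimal_certified_dominating (D : {set T}) : Prop :=
  certified_dominating D /\
  forall D' : {set T}, D' \proper D -> ~ certified_dominating D'.

(* The induced subgraph G[S] is a corona H o K1: its vertex set S splits into
   the vertices B of H and, for each b in B, one new pendant vertex f b whose
   only neighbour in G[S] is b. *)
Definition induced_corona (S : {set T}) : Prop :=
  exists (B : {set T}) (f : T -> T),
    [/\ B \subset S,
        {in B &, injective f},
        S = B :|: f @: B,
        [disjoint B & f @: B]
      & forall b, b \in B -> [set u in S | e (f b) u] = [set b]].

End Graphs.

(* Main.v *)
Require Import Defs.
From mathcomp Require Import all_boot.
Set Implicit Arguments. Unset Strict Implicit. Unset Printing Implicit Defensive.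

Lemma in_nbhd (T : finType) (e : rel T) v u : (u \in nbhd e v) = e v u.
Proof. by rewrite /nbhd inE. Qed.

Lemma in_cnbhd (T : finType) (e : rel T) v u :
  (u \in cnbhd e v) = (u == v) || e v u.
Proof. by rewrite /cnbhd !inE. Qed.

Lemma leaf_nb (T : finType) (e : rel T) v u :
  leaf e v -> e v u -> nbhd e v = [set u].
Proof.
move=> /cards1P [x Hx] evu.
have : u \in nbhd e v by rewrite in_nbhd.
by rewrite Hx inE => /eqP ->.
Qed.

Lemma leaf_uniq (T : finType) (e : rel T) v u w :
  leaf e v -> e v u -> e v w -> w = u.
Proof.
move=> lv evu evw; have := leaf_nb lv evu => H.
have : w \in nbhd e v by rewrite in_nbhd.
by rewrite H inE => /eqP.
Qed.

Theorem lemma3p1 (T : finType) (e : rel T) :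
  simple_graph e -> connected_graph e -> 2 <= #|T| ->
  forall D : {set T}, minimal_certified_dominating e D ->
  (forall v : T, cnbhd e v \subset D -> leaf e v || weak_support e v) /\
  (let S := [set v | cnbhd e v \subset D] in
   S = set0 \/ induced_corona e S).
Proof.
move=> [sym irr] conn cardT D [[domD certD] minD].
have irr' : forall x, e x x = false by move=> x; exact: irr.
have neq_of_e : forall x y, e x y -> x != y.
  by move=> x y exy; apply/eqP => Exy; rewrite Exy irr' in exy.
have nbex : forall v, exists u, e v u.
  move=> v.
  have [w wv] : exists w, w != v.
    have /card_gt1P [x [y [_ _ xy]]] : 1 < #|[set: T]| by rewrite cardsT.
    by case: (eqVneq x v) => [Exv|]; [exists y; rewrite -Exv eq_sym|exists x].
  have /connectP [p pth lst] := conn v w.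
  case: p pth lst => [|z p] /=; first by move=> _ Ewv; rewrite Ewv eqxx in wv.
  by move=> /andP [evz _] _; exists z.
pose inS v := cnbhd e v \subset D.
have inS_D : forall v, inS v -> v \in D.
  by move=> v /subsetP; apply; rewrite in_cnbhd eqxx.
have inS_nb : forall v u, inS v -> e v u -> u \in D.
  by move=> v u /subsetP H evu; apply: H; rewrite in_cnbhd evu orbT.
have keyL : forall A : {set T}, (forall a, a \in A -> inS a) -> A != set0 ->
    (forall a, a \in A -> exists2 y, e a y & y \notin A) ->
    (forall u, inS u -> u \notin A -> #|nbhd e u :&: A| != 1) -> False.
  move=> A AS An0 Hi Hii.
  have [a aA] := set0Pn _ An0.
  apply: (minD (D :\: A)).
    rewrite properEneq subsetDl andbT; apply/eqP => E.
    have : a \in D :\: A by rewrite E; exact: inS_D (AS a aA).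
    by rewrite inE aA.
  split.
    move=> x; rewrite inE negb_and negbK.
    case xA: (x \in A) => /= xD.
      have [y exy yA] := Hi x xA.
      by exists y => //; rewrite inE yA (inS_nb x y (AS x xA) exy).
    have [y yD exy] := domD x xD.
    exists y => //; rewrite inE yD andbT; apply/negP => yA.
    by move: xD; rewrite (inS_nb y x (AS y yA)) // sym.
  move=> u; rewrite inE => /andP [uA uD].
  case Su: (inS u).
    have -> : nbhd e u :\: (D :\: A) = nbhd e u :&: A.
      apply/setP => w; rewrite !inE.
      case ew: (e u w); rewrite ?andbF ?andbT //.
      by rewrite (inS_nb u w Su ew) /= andbT negbK.
    have := Hii u Su uA.
    case: #|_| => [|[|n]] //= _; [by left | by right].
  have [H0|H2] := certD u uD.
    exfalso; move: Su; rewrite /inS => /negP; apply; apply/subsetP => w.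
    rewrite in_cnbhd => /orP [/eqP -> //|euw].
    apply/negPn/negP => wD.
    have : w \in nbhd e u :\: D by rewrite inE wD in_nbhd.
    by move/eqP: H0; rewrite cards_eq0 => /eqP ->; rewrite inE.
  right; apply: (leq_trans H2); apply: subset_leq_card.
  apply/subsetP => w; rewrite !inE => /andP [wD ->]; by rewrite (negbTE wD) andbF.

have cardI0 : forall u (A : {set T}), (forall x, e u x -> x \notin A) ->
    #|nbhd e u :&: A| = 0.
  move=> u A H; apply/eqP; rewrite cards_eq0; apply/eqP/setP => x.
  rewrite in_setI in_nbhd in_set0; apply/negP => /andP [eux xA].
  by have := H x eux; rewrite xA.
have Snbr : forall v, inS v -> exists2 u, inS u & e v u.
  move=> v Sv.
  have [/existsP [u /andP [Su evu]]|H] := boolP [exists u, inS u && e v u].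
    by exists u.
  exfalso; apply: (keyL [set v]).
  - by move=> a; rewrite inE => /eqP ->.
  - by apply/set0Pn; exists v; rewrite inE.
  - move=> a; rewrite inE => /eqP ->; have [y evy] := nbex v.
    by exists y => //; rewrite inE eq_sym neq_of_e.
  - move=> u Su uA; rewrite cardI0 // => x eux; rewrite inE.
    apply/eqP => Exv; move: eux; rewrite Exv => euv.
    by move/existsPn: H => /(_ u); rewrite Su sym euv.
have leafS : forall v w, inS v -> e v w -> leaf e w -> inS w.
  move=> v w Sv evw lw; apply/subsetP => x; rewrite in_cnbhd.
  case/orP => [/eqP -> | ewx]; first exact: inS_nb Sv evw.
  have -> : x = v by apply: (leaf_uniq lw) ewx; rewrite sym.
  exact: inS_D.
have part1 : forall v, inS v -> leaf e v || weak_support e v.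
  move=> v Sv; case lv: (leaf e v) => //=; rewrite /weak_support.
  case: (ltngtP #|leaf_nbrs e v| 1) => // [H0|H2]; exfalso.
    have nsv : ~~ Defs.support e v.
      apply/negP => /existsP [u /andP [evu lu]].
      have H : 0 < #|leaf_nbrs e v|.
        by apply/card_gt0P; exists u; rewrite /leaf_nbrs inE evu lu.
      by move: H0; rewrite ltnNge H.
    pose Z := [set z | inS z && ~~ leaf e z && ~~ Defs.support e z].
    pose N := [set z in Z | nbhd e z \subset Z].
    pose P := fun I : {set T} =>
      (I \subset N) && [forall x in I, forall y in I, ~~ e x y].
    have P0 : P set0.
      by rewrite /P sub0set; apply/forall_inP => x; rewrite inE.
    have [I maxI _] := maxset_exists P0.
    have /andP [IN /forall_inP Iind'] := maxsetp maxI.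
    have Iind : forall x y, x \in I -> y \in I -> ~~ e x y.
      by move=> x y xI yI; move/forall_inP: (Iind' x xI); apply.
    have Imax : forall z, z \in N -> z \notin I -> exists2 i, i \in I & e z i.
      move=> z zN zI.
      case: (boolP [exists i in I, e z i]) => [/exists_inP [i iI ezi]|H].
        by exists i.
      exfalso.
      have nz : forall y, y \in I -> ~~ e z y.
        by move=> y yI; apply/negP => ezy; move/negP: H; apply; apply/exists_inP; exists y.
      have PI' : P (z |: I).
        rewrite /P subUset sub1set zN IN /=.
        apply/forall_inP => x; rewrite !inE => /orP [/eqP->|xI];
          apply/forall_inP => y; rewrite !inE => /orP [/eqP->|yI].
        - by rewrite irr'.
        - exact: nz.
        - by rewrite sym nz.
        - exact: Iind.
      have E := maxsetsup maxI PI' (subsetUr _ _).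
      by move: zI; rewrite -E setU11.
    pose Y := Z :\: I.
    pose L2 := [set l | inS l && leaf e l &&
                 [exists s, e l s && [exists y in Y, e s y]]].
    have inZ : forall z, (z \in Z) = [&& inS z, ~~ leaf e z & ~~ Defs.support e z].
      by move=> z; rewrite inE andbA.
    have inY : forall z, (z \in Y) = (z \notin I) && (z \in Z).
      by move=> z; rewrite inE.
    have inN : forall z, (z \in N) = (z \in Z) && (nbhd e z \subset Z).
      by move=> z; rewrite inE.
    have inL2 : forall l, (l \in L2) = [&& inS l, leaf e l &
                 [exists s, e l s && [exists y in Y, e s y]]].
      by move=> l; rewrite inE andbA.
    have supp_of : forall s l, e s l -> leaf e l -> Defs.support e s.
      by move=> s l esl ll; apply/existsP; exists l; rewrite esl ll.
    have vZ : v \in Z by rewrite inZ Sv lv nsv.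
    apply: (keyL (Y :|: L2)).
    - move=> a; rewrite in_setU inY inL2 inZ.
      by case/orP => [/andP [_ /and3P [->]]|/and3P [->]].
    - apply/set0Pn; case vI: (v \in I).
        have /subsetP vN := IN; have := vN v vI; rewrite inN vZ /= => /subsetP nZ.
        have [w evw] := nbex v; exists w; rewrite in_setU inY nZ ?in_nbhd //.
        apply/orP; left; rewrite andbT; apply/negP => wI.
        by move: (Iind v w vI wI); rewrite evw.
      by exists v; rewrite in_setU inY vI vZ.
    - move=> a; rewrite in_setU => /orP [aY|aL].
        move: (aY); rewrite inY => /andP [aI aZ].
        case aN: (a \in N).
          have [i iI eai] := Imax a aN aI; exists i => //.
          have /subsetP := IN => /(_ i iI); rewrite inN => /andP [iZ _].
          move: iZ; rewrite inZ => /and3P [_ nli _].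
          by rewrite in_setU inY iI inL2 (negbTE nli) andbF.
        move: aN; rewrite inN aZ /= => /subsetPn [y ya yZ].
        exists y; first by rewrite -in_nbhd.
        rewrite in_setU inY (negbTE yZ) andbF /= inL2; apply/negP.
        case/and3P => _ ly _; move: aZ; rewrite inZ => /and3P [_ _ /negP]; apply.
        by apply: (supp_of a y); rewrite -?in_nbhd.
      move: aL; rewrite inL2 => /and3P [Sa la /existsP [s /andP [eas /exists_inP [y yY esy]]]].
      exists s => //; rewrite in_setU negb_or; apply/andP; split.
        rewrite inY negb_and; apply/orP; right; rewrite inZ.
        by rewrite (supp_of s a) ?andbF // sym.
      rewrite inL2; apply/negP => /and3P [_ ls _].
      have ya : y = a by apply: (leaf_uniq ls) esy; rewrite sym.
      by move: yY; rewrite inY inZ ya la !andbF.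
    - move=> u Su uA; case lu: (leaf e u).
        have [s eus] := nbex u.
        have ssup : Defs.support e s by apply: (supp_of s u); rewrite // sym.
        rewrite cardI0 // => x eux.
        have -> : x = s by apply: (leaf_uniq lu).
        rewrite in_setU inY inZ ssup !andbF /= inL2; apply/negP.
        case/and3P => _ ls /existsP [t /andP [est /exists_inP [y yY ety]]].
        have tu : t = u by apply: (leaf_uniq ls) est; rewrite sym.
        move: ety; rewrite tu => euy.
        have ys : y = s by apply: (leaf_uniq lu).
        by move: yY; rewrite inY inZ ys ssup !andbF.
      case su: (Defs.support e u).
        case: (boolP [exists y in Y, e u y]) => [/exists_inP [y yY euy]|nY].
          move/existsP: su => [l /andP [eul ll]].
          have lL2 : l \in L2.
            rewrite inL2 ll (leafS u l) //=; apply/existsP; exists u.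
            by rewrite sym eul /=; apply/exists_inP; exists y.
          rewrite neq_ltn; apply/orP; right; apply/card_gt1P; exists y, l.
          split; rewrite ?in_setI ?in_nbhd ?in_setU ?yY ?lL2 ?orbT ?andbT //.
          apply/eqP => Eyl; move: yY; rewrite inY inZ Eyl ll.
          by rewrite !andbF.
        rewrite cardI0 // => x eux; rewrite in_setU negb_or; apply/andP; split.
          by apply/negP => xY; move/exists_inP: nY; apply; exists x.
        rewrite inL2; apply/negP => /and3P [_ lx /existsP [t /andP [ext /exists_inP [y yY ety]]]].
        have tu : t = u by apply: (leaf_uniq lx) ext; rewrite sym.
        by move/exists_inP: nY; apply; exists y; rewrite -?tu.
      have uZ : u \in Z by rewrite inZ Su lu su.
      have uI : u \in I.
        by move: uA; rewrite in_setU inY uZ andbT negb_or negbK => /andP [].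
      have /subsetP := IN => /(_ u uI); rewrite inN uZ /= => /subsetP nZ.
      have -> : nbhd e u :&: (Y :|: L2) = nbhd e u.
        apply/setIidPl/subsetP => x xn; rewrite in_setU inY nZ // andbT.
        apply/orP; left; apply/negP => xI.
        by move: (Iind u x uI xI); rewrite -in_nbhd xn.
      by move: lu; rewrite /leaf => ->.

  have /card_gt1P [w1 [w2 [w1L w2L w12]]] := H2.
  move: w1L w2L; rewrite /leaf_nbrs !inE => /andP [ev1 l1] /andP [ev2 l2].
  apply: (keyL [set w1; w2]).
  - by move=> a; rewrite !inE => /orP [/eqP->|/eqP->]; apply: leafS Sv _ _.
  - by apply/set0Pn; exists w1; rewrite !inE eqxx.
  - move=> a; rewrite !inE => /orP [/eqP->|/eqP->]; exists v;
      rewrite ?(sym _ v) // !inE negb_or !neq_of_e //.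
  - move=> u Su uA; case: (eqVneq u v) => [->|uv].
      have -> : nbhd e v :&: [set w1; w2] = [set w1; w2].
        apply/setIidPr/subsetP => x; rewrite !inE.
        by case/orP => /eqP ->.
      by rewrite cards2 w12.
    rewrite cardI0 // => x eux; rewrite !inE; apply/negP.
    case/orP => /eqP Ex; move: eux; rewrite Ex => eux; move/eqP: uv; apply.
      by apply: (leaf_uniq l1); rewrite sym.
    by apply: (leaf_uniq l2); rewrite sym.
split; first exact: part1.
move=> S; right.
have inS_S : forall x, (x \in S) = inS x by move=> x; rewrite /S inE.
case: (boolP [exists x, leaf e x && Defs.support e x]).
  move=> /existsP [x /andP [lx /existsP [u /andP [exu lu]]]].
  have eux : e u x by rewrite sym.
  have inD : forall a b, leaf e a -> leaf e b -> e a b -> a \in D.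
    move=> a b la lb eab; apply/negPn/negP => aD.
    have [y yD eay] := domD a aD.
    have yb : y = b by apply: (leaf_uniq la).
    have eba : e b a by rewrite sym.
    have Hn : nbhd e b :\: D = [set a].
      rewrite (leaf_nb lb eba); apply/setP => w; rewrite !inE.
        by case: (eqVneq w a) => [->|]; rewrite ?aD ?andbF.
    have bD : b \in D by rewrite -yb.
    by case: (certD b bD); rewrite Hn cards1.
  have cl : forall z w, z \in [set x; u] -> e z w -> w \in [set x; u].
    move=> z w; rewrite !inE => /orP [/eqP -> exw|/eqP -> euw].
      by rewrite (leaf_uniq lx exu exw) eqxx orbT.
    by rewrite (leaf_uniq lu eux euw) eqxx.
  have gen : forall p z0, z0 \in [set x; u] -> path e z0 p ->
      last z0 p \in [set x; u].
    elim=> [|z p IH] z0 //= z0in /andP [ez pth].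
    exact: IH (cl _ _ z0in ez) pth.
  have allxu : forall y, y \in [set x; u].
    move=> y; have /connectP [p pth ->] := conn x y.
    by apply: gen pth; rewrite !inE eqxx.
  have xD := inD x u lx lu exu.
  have uD := inD u x lu lx eux.
  have allS : forall y, y \in S.
    move=> y; rewrite inS_S; apply/subsetP => w _.
    by have := allxu w; rewrite !inE => /orP [] /eqP ->.
  exists [set x], (fun _ => u); split.
  - by rewrite sub1set allS.
  - by move=> a b; rewrite !inE => /eqP -> /eqP ->.
  - apply/setP => y; rewrite imset_set1 allS.
    by have := allxu y; rewrite !inE.
  - by rewrite imset_set1 disjoints1 inE eq_sym neq_of_e.
  - move=> b; rewrite inE => /eqP ->; apply/setP => w.
    rewrite inE allS /= inE; case: (eqVneq w x) => [->|wx]; first by [].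
    by apply/negP => euw; move/eqP: wx; apply; apply: leaf_uniq lu eux euw.
move=> noK2.
pose f := fun b => odflt b [pick l | e b l && leaf e l].
pose B := [set b in S | ~~ leaf e b].
have inB : forall b, (b \in B) = inS b && ~~ leaf e b by move=> b; rewrite !inE.
have fP : forall b, b \in B -> e b (f b) && leaf e (f b).
  move=> b; rewrite inB => /andP [Sb lb].
  have := part1 b Sb; rewrite (negbTE lb) /= /weak_support => /cards1P [l0 Hl0].
  rewrite /f; case: pickP => [l Hl //|H0].
  have : l0 \in leaf_nbrs e b by rewrite Hl0 inE.
  by rewrite /leaf_nbrs inE H0.
have fS : forall b, b \in B -> f b \in S.
  move=> b bB; have /andP [ebf lf] := fP b bB; move: bB; rewrite inB => /andP [Sb _].
  by rewrite inS_S; apply: leafS Sb ebf lf.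
exists B, f; split.
- by apply/subsetP => b; rewrite inB inS_S => /andP [].
- move=> b1 b2 B1 B2 E.
  have /andP [e1 l1] := fP b1 B1; have /andP [e2 _] := fP b2 B2.
  apply: (leaf_uniq l1); rewrite sym //; by rewrite E.
- apply/setP => y; rewrite in_setU; apply/idP/idP.
    move=> yS; case ly: (leaf e y); last by rewrite inB -inS_S yS ly.
    move: yS; rewrite inS_S => Sy; have [s Ss eys] := Snbr y Sy.
    have ls : ~~ leaf e s.
      apply/negP => ls; move/existsP: noK2; apply; exists y; rewrite ly /=.
      by apply/existsP; exists s; rewrite eys ls.
    have sB : s \in B by rewrite inB Ss ls.
    apply/orP; right; apply/imsetP; exists s => //.
    have := part1 s Ss; rewrite (negbTE ls) /= /weak_support => /cards1P [l0 Hl0].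
    have /andP [esf lf] := fP s sB.
    have : y \in leaf_nbrs e s by rewrite /leaf_nbrs inE ly andbT sym.
    have : f s \in leaf_nbrs e s by rewrite /leaf_nbrs inE esf lf.
    by rewrite Hl0 !inE => /eqP -> /eqP ->.
  case/orP => [|/imsetP [b bB ->]]; last exact: fS.
  by rewrite inB inS_S => /andP [].
- rewrite -setI_eq0; apply/eqP/setP => y; rewrite in_setI in_set0.
  apply/negP => /andP [yB /imsetP [b bB Eyb]].
  have /andP [_ lf] := fP b bB.
  by move: yB; rewrite inB Eyb lf andbF.
- move=> b bB; have /andP [ebf lf] := fP b bB.
  have Sb : b \in S by move: bB; rewrite inB inS_S => /andP [].
  apply/setP => w; rewrite inE [w \in [set b]]inE.
  case: (eqVneq w b) => [->|wb]; first by rewrite Sb sym.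
  apply/negbTE/negP => /andP [_ efw]; move/eqP: wb; apply.
  by apply: (leaf_uniq lf) efw; rewrite sym.
Qed.
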